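(* Let $R$ and $S$ be commutative rings with identity, $f:R\to S$ a ring homomorphism, and $J$ a nonzero proper ideal of $S$. If $R\bowtie^f J$ is compactly packed, then $R$ is compactly packed and the set $\operatorname{Spec}(S)\setminus V(J)$ is compactly packed.
   Context: $R\bowtie^f J:=\{(r,f(r)+j)\mid r\in R,\ j\in J\}$, a subring of $R\times S$. For a commutative ring $A$, $V(I)$ is the set of prime ideals of $A$ containing the ideal $I$. A subset $X\subseteq\operatorname{Spec}(A)$ is compactly packed if whenever an ideal $I$ of $A$ is contained in the union of a family $\{\mathfrak{p}_i\}_i$ of elements of $X$, then $I\subseteq\mathfrak{p}_i$ for some $i$; the ring $A$ is compactly packed if $\operatorname{Spec}(A)$ is compactly packed. *)

(* Defs.v *)
From HB Require Import structures.
From mathcomp Require Import all_boot all_algebra.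
From mathcomp Require Import boolp.

Set Implicit Arguments.
Unset Strict Implicit.
Unset Printing Implicit Defensive.

Import GRing.Theory.
Local Open Scope ring_scope.

Definition is_ideal (A : comPzRingType) (I : A -> Prop) : Prop :=
  [/\ I 0,
      (forall x y, I x -> I y -> I (x - y)) &
      (forall a x, I x -> I (a * x))].

Definition is_prime_ideal (A : comPzRingType) (P : A -> Prop) : Prop :=
  [/\ is_ideal P, ~ P 1 &
      (forall a b, P (a * b) -> P a \/ P b)].

Definition Spec (A : comPzRingType) : (A -> Prop) -> Prop :=
  fun P => is_prime_ideal P.

Definition Vset (A : comPzRingType) (I : A -> Prop) : (A -> Prop) -> Prop :=
  fun P => is_prime_ideal P /\ (forall x, I x -> P x).

Definition compactly_packed_set (A : comPzRingType) (X : (A -> Prop) -> Prop) : Prop :=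
  forall I : A -> Prop, is_ideal I ->
  forall (Idx : Type) (p : Idx -> A -> Prop),
    (forall i, X (p i)) ->
    (forall x, I x -> exists i, p i x) ->
    exists i, forall x, I x -> p i x.

Definition compactly_packed (A : comPzRingType) : Prop :=
  compactly_packed_set (@Spec A).

Definition amalg_pred (R S : comPzRingType) (f : {rmorphism R -> S})
  (J : S -> Prop) : pred (R * S)%type :=
  fun x => `[< exists r j, J j /\ x = (r, f r + j) >].

Section Amalgamation.
Variables (R S : comPzRingType) (f : {rmorphism R -> S}) (J : S -> Prop).
Hypothesis hJ : is_ideal J.

Lemma amalg_subring_closed : subring_closed (amalg_pred f J).
Proof.
case: hJ => J0 JB JM.
split.
- apply/asboolP; exists 1, 0; split => //; by rewrite rmorph1 addr0.
- move=> x y /asboolP [r [j [Jj ->]]] /asboolP [r' [j' [Jj' ->]]].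
  apply/asboolP; exists (r - r'), (j - j'); split; first exact: JB.
  rewrite rmorphB; congr (_, _) => /=; by rewrite opprD addrACA.
- move=> x y /asboolP [r [j [Jj ->]]] /asboolP [r' [j' [Jj' ->]]].
  apply/asboolP; exists (r * r'), (f r * j' + j * f r' + j * j'); split.
  + have Jneg : forall z, J z -> J (- z).
      by move=> z Jz; rewrite -sub0r; apply: JB.
    have JD : forall u v, J u -> J v -> J (u + v).
      by move=> u v Ju Jv; rewrite -[v]opprK; apply: JB => //; apply: Jneg.
    apply: (JD); [apply: (JD)|]; [apply: (JM) | rewrite mulrC; apply: (JM) | apply: (JM)] => //.
  + rewrite rmorphM; congr (_, _).
    by rewrite mulrDl !mulrDr !addrA [j * f r']mulrC.
Qed.

Definition amalg_carrier of is_ideal J := {x : (R * S)%type | amalg_pred f J x}.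

HB.instance Definition _ := [isSub for (@sval _ (fun x => amalg_pred f J x))
  : amalg_carrier hJ -> _].
HB.instance Definition _ := [Choice of amalg_carrier hJ by <:].
HB.instance Definition _ :=
  GRing.SubChoice_isSubComPzRing.Build _ _ (amalg_carrier hJ) amalg_subring_closed.

End Amalgamation.

Definition amalgamation (R S : comPzRingType) (f : {rmorphism R -> S})
  (J : S -> Prop) (hJ : is_ideal J) : comPzRingType :=
  @amalg_carrier R S f J hJ.

(* Main.v *)
Require Import Defs.
From HB Require Import structures.
From mathcomp Require Import all_boot all_algebra.
From mathcomp Require Import boolp.
From Stdlib Require Import Classical.

Local Open Scope ring_scope.
Import GRing.Theory.

Section Pull.
Variables (A B : comPzRingType) (g : A -> B).
Hypotheses (g1 : g 1 = 1) (gB : forall x y, g (x - y) = g x - g y)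
  (gM : forall x y, g (x * y) = g x * g y).

Lemma g0 : g 0 = 0.
Proof. by rewrite -(subrr 0) gB subrr. Qed.

Lemma pull_ideal (I : B -> Prop) : is_ideal I -> is_ideal (fun a => I (g a)).
Proof.
case=> I0 IB IM; split; first by rewrite g0.
- by move=> x y Hx Hy; rewrite gB; apply: IB.
- by move=> a x Hx; rewrite gM; apply: IM.
Qed.

Lemma pull_prime (P : B -> Prop) : is_prime_ideal P -> is_prime_ideal (fun a => P (g a)).
Proof.
case=> Pi P1 PM; split; first exact: pull_ideal.
- by rewrite g1.
- by move=> a b; rewrite gM; apply: PM.
Qed.
End Pull.

Theorem theorem4p2 (R S : comPzRingType) (f : {rmorphism R -> S})
  (J : S -> Prop) (hJ : is_ideal J)
  (hJnz : exists j, J j /\ j <> 0) (hJp : ~ J 1) :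
  compactly_packed (amalgamation f hJ) ->
  compactly_packed R /\
  compactly_packed_set (fun P : S -> Prop => Spec P /\ ~ Vset J P).
Proof.
move=> cp.
set A := amalgamation f hJ.
have v1 : (val (1 : A)) = 1 by rewrite rmorph1.
have vB : forall x y : A, val (x - y) = val x - val y by move=> x y; rewrite rmorphB.
have vM : forall x y : A, val (x * y) = val x * val y by move=> x y; rewrite rmorphM.
split.
- move=> I hI Idx p hp hcov.
  have := cp (fun a : A => I (val a).1) (@pull_ideal _ _ (fun a : A => (val a).1) _ _ I hI)
    Idx (fun i (a : A) => p i (val a).1).
  case.
  + by move=> x y; rewrite vB.
  + by move=> x y; rewrite vM.
  + move=> i; apply: (@pull_prime _ _ (fun a : A => (val a).1) _ _ _ _ (hp i)).
    * by rewrite v1.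
    * by move=> x y; rewrite vB.
    * by move=> x y; rewrite vM.
  + by move=> x Hx; apply: hcov.
  move=> i Hi; exists i => x Hx.
  have Px : amalg_pred f J (x, f x).
    by apply/asboolP; exists x, 0; split; [by have [J0 _ _] := hJ|rewrite addr0].
  exact: (Hi (exist _ (x, f x) Px : A)).
- move=> I hI Idx p hp hcov.
  have := cp (fun a : A => I (val a).2) (@pull_ideal _ _ (fun a : A => (val a).2) _ _ I hI)
    Idx (fun i (a : A) => p i (val a).2).
  case.
  + by move=> x y; rewrite vB.
  + by move=> x y; rewrite vM.
  + move=> i; case: (hp i) => hpi _.
    apply: (@pull_prime _ _ (fun a : A => (val a).2) _ _ _ _ hpi).
    * by rewrite v1.
    * by move=> x y; rewrite vB.
    * by move=> x y; rewrite vM.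
  + by move=> x Hx; apply: hcov.
  move=> i Hi; exists i => x Hx.
  case: (hp i) => hpi nV.
  have [j [Jj nj]] : exists j, J j /\ ~ p i j.
    apply: NNPP => H; apply: nV; split => // y Jy.
    by apply: NNPP => ny; apply: H; exists y.
  have Px : amalg_pred f J (0, j * x).
    apply/asboolP; exists 0, (j * x); split; last by rewrite rmorph0 add0r.
    by have [_ _ JM] := hJ; rewrite mulrC; apply: JM.
  have := Hi (exist _ (0, j * x) Px : A).
  case: hI => _ _ IM.
  move=> /(_ (IM j x Hx)) /=.
  by case: hpi => _ _ PM /PM [].
Qed.
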